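(* Any data structure for $n$-vertex directed graphs that decides, for any query set $F$ of at most $2f$ failing edges with $2f = O(\log n)$, whether the fault-tolerant diameter $\mathrm{diam}(G-F)$ is finite requires $\Omega(2^f n)$ bits of space.
   Context: $G-F$ is $G$ with the edges of $F$ removed and $\mathrm{diam}(H)=\max_{s,t} d_H(s,t)$, the maximum shortest-path distance over ordered vertex pairs; it is finite iff $H$ is strongly connected. *)

(* Defs.v *)
From mathcomp Require Import all_boot.
Set Implicit Arguments. Unset Strict Implicit. Unset Printing Implicit Defensive.

Definition loopless n (E : {set 'I_n * 'I_n}) : Prop :=
  forall v : 'I_n, (v, v) \notin E.

Definition remove_edges n (E F : {set 'I_n * 'I_n}) : {set 'I_n * 'I_n} :=
  E :\: F.

Definition adj n (E : {set 'I_n * 'I_n}) : rel 'I_n :=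
  fun u v => (u, v) \in E.

Definition dist_le n (E : {set 'I_n * 'I_n}) (s t : 'I_n) (k : nat) : Prop :=
  exists p : seq 'I_n, [/\ path (adj E) s p, last s p = t & size p <= k].

Definition diam_le n (E : {set 'I_n * 'I_n}) (D : nat) : Prop :=
  forall s t : 'I_n, dist_le E s t D.

Definition diam_finite n (E : {set 'I_n * 'I_n}) : Prop :=
  exists D : nat, diam_le E D.

(* Main.v *)
Require Import Defs.
From mathcomp Require Import all_boot zify.
Set Implicit Arguments. Unset Strict Implicit. Unset Printing Implicit Defensive.

Lemma conn_diam n (E : {set 'I_n * 'I_n}) :
  (forall s t, connect (adj E) s t) -> diam_finite E.
Proof.
move=> H; exists n => s t.
have /connectP[p pp ->] := H s t.
case: (shortenP pp) => p' pp' up' _.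
exists p'; split => //.
have := card_uniqP up'; rewrite /= => Hc.
have : #|s :: p'| <= #|'I_n| by apply: max_card.
by rewrite Hc card_ord /= => /ltnW.
Qed.

Lemma diam_conn n (E : {set 'I_n * 'I_n}) s t :
  diam_finite E -> connect (adj E) s t.
Proof.
case=> D /(_ s t) [p [pp lp _]]; apply/connectP; by exists p.
Qed.

Lemma closed_conn (T : finType) (e : rel T) (S : pred T) x y :
  (forall u v, S u -> e u v -> S v) -> S x -> connect e x y -> S y.
Proof.
move=> Hc Sx /connectP[p pp ->]; elim: p x Sx pp => [|z p IH] x Sx //=.
case/andP=> exz pz; apply: IH pz; exact: Hc exz.
Qed.

Definition anc D l m := [exists a : 'I_D.+1, l %/ 2 ^ a == m].

Lemma ancP D l m : reflect (exists2 a, a <= D & l %/ 2 ^ a = m) (anc D l m).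
Proof.
apply: (iffP existsP) => [[a /eqP <-]|[a Ha <-]]; first by exists a; rewrite // -ltnS.
by exists (Ordinal (Ha : a < D.+1)).
Qed.

Lemma div2S l a : l %/ 2 ^ a.+1 = l %/ 2 ^ a %/ 2.
Proof. by rewrite expnSr divnMA. Qed.

Lemma anc_bounds D l a : 2 ^ D <= l < 2 ^ D.+1 -> a <= D ->
  0 < l %/ 2 ^ a /\ l %/ 2 ^ a < 2 ^ D.+1.
Proof.
case/andP=> H1 H2 Ha; split.
  rewrite divn_gt0 ?expn_gt0 //; apply: leq_trans H1; exact: leq_pexp2l.
exact: leq_ltn_trans (leq_div _ _) H2.
Qed.

Lemma anc_top D l : 2 ^ D <= l < 2 ^ D.+1 -> l %/ 2 ^ D = 1.
Proof.
case/andP=> H1 H2; apply/eqP; rewrite eqn_leq; apply/andP; split.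
  by rewrite -ltnS ltn_divLR ?expn_gt0 // -expnS.
by rewrite leq_divRL ?expn_gt0 // mul1n.
Qed.

Lemma anc_leaf D l m : 2 ^ D <= l < 2 ^ D.+1 -> anc D l m -> 2 ^ D <= m -> m = l.
Proof.
move=> Hl /ancP[[|a] Ha <-]; first by rewrite expn0 divn1.
case/andP: Hl => H1 H2.
have : l %/ 2 ^ a.+1 <= l %/ 2 by rewrite div2S leq_div2r // leq_div.
move: H2; rewrite expnS => H2 H3 H4; lia.
Qed.

Definition sib x := x %/ 2 * 2 + (1 - x %% 2).

Lemma cut_sib D l p q : 2 ^ D <= l < 2 ^ D.+1 -> q %/ 2 = p -> p < 2 ^ D ->
  anc D l p -> ~~ anc D l q -> exists i : 'I_D, p = l %/ 2 ^ i.+1 /\ q = sib (l %/ 2 ^ i).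
Proof.
move=> Hl Hq Hp /ancP[[|i] Ha Hpa] Hnq.
  by move: Hl Hp; rewrite expn0 divn1 in Hpa; rewrite Hpa; lia.
exists (Ordinal (Ha : i < D)); split => //=.
have Hne : q <> l %/ 2 ^ i.
  move=> E; move/negP: Hnq; apply; apply/ancP; exists i; [exact: ltnW | by []].
move: Hpa; rewrite div2S /sib => Hpa.
move: (l %/ 2 ^ i) Hpa Hne => x; lia.
Qed.

Section Constr.
Variables (n' K g : nat).
Local Notation V := 'I_n'.+1.
Local Notation Q := (2 ^ g).
Local Notation P := (4 * 2 ^ g).
Local Notation M := (8 * 2 ^ g).
Hypothesis HKM : K * M <= n'.

Definition cp (v : V) := (v : nat).-1 %/ M.
Definition loc (v : V) := (v : nat).-1 %% M.
Definition valid (v : V) := (0 < v) && (cp v < K).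
Definition T1node j := (0 < j) && (j < P).
Definition T1leaf j := (2 * Q <= j) && (j < P).
Definition T2node j := (P < j) && (j < P + 2 * Q).
Definition T2leaf j := (P + Q <= j) && (j < P + 2 * Q).
Definition R2 := P.+1.
Definition hubtarget j := [|| ~~ (T1node j || T2node j), j == 1 | j == R2].
Definition X := ('I_K * 'I_(2 * Q) * 'I_Q)%type.
Definition bitnat (b : {ffun X -> bool}) k x y :=
  [exists i : X, [&& b i, i.1.1 == k :> nat, i.1.2 == x :> nat & i.2 == y :> nat]].
Definition localedge b k j j' :=
  [|| [&& T1node j, T1node j' & j' %/ 2 == j],
      [&& T2node j, T2node j' & (j - P) %/ 2 == j' - P],
      [&& T1leaf j, T2leaf j' & bitnat b k (j - 2 * Q) (j' - P - Q)]
    | [&& j == R2, T1node j' || T2node j' & j' != R2]].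
Definition erel b (u v : V) :=
  [|| (0 < u) && (v == 0 :> nat),
      [&& u == 0 :> nat, 0 < v & ~~ valid v || hubtarget (loc v)]
    | [&& valid u, valid v, cp u == cp v & localedge b (cp u) (loc u) (loc v)]].
Definition Eb b := [set e : V * V | erel b e.1 e.2].
Definition node k j : V := inord (1 + k * M + j).
Definition hub : V := inord 0.

Lemma M_gt0 : 0 < M. Proof. by rewrite muln_gt0 expn_gt0. Qed.

Lemma node_val k j : k < K -> j < M -> (node k j : nat) = 1 + k * M + j.
Proof.
move=> Hk Hj; rewrite inordK //.
have : k.+1 * M <= K * M by rewrite leq_mul2r Hk orbT.
rewrite mulSn; move: (k * M) => t; lia.
Qed.

Lemma hub_val : (hub : nat) = 0. Proof. by rewrite inordK. Qed.

Lemma cp_node k j : k < K -> j < M -> cp (node k j) = k.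
Proof.
move=> Hk Hj; rewrite /cp node_val // add1n /= divnMDl ?M_gt0 //.
by rewrite divn_small // addn0.
Qed.

Lemma loc_node k j : k < K -> j < M -> loc (node k j) = j.
Proof.
move=> Hk Hj; rewrite /loc node_val // add1n /= modnMDl modn_small //.
Qed.

Lemma valid_node k j : k < K -> j < M -> valid (node k j).
Proof. by move=> Hk Hj; rewrite /valid cp_node // node_val // Hk. Qed.

Lemma loc_lt v : loc v < M.
Proof. by rewrite /loc ltn_mod M_gt0. Qed.

Lemma node_eta v : valid v -> v = node (cp v) (loc v).
Proof.
case/andP=> H0 Hk; apply: val_inj => /=; rewrite node_val // ?loc_lt //.
by rewrite /cp /loc -addnA -divn_eq add1n prednK.
Qed.

Lemma hub_invalid : ~~ valid hub.
Proof. by rewrite /valid hub_val. Qed.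

Lemma loopless_Eb b : loopless (Eb b).
Proof.
move=> v; rewrite inE /erel /=; apply/negP.
case/or3P.
- case/andP=> H /eqP; lia.
- case/and3P=> /eqP H1 H2 _; lia.
case/and4P=> _ _ _; rewrite /localedge /T1node /T2node /T1leaf /T2leaf /R2.
case/or4P.
- case/and3P=> /andP[H1 _] _ /eqP; lia.
- case/and3P=> /andP[H1 _] _ /eqP; lia.
- case/and3P=> /andP[_ H1] /andP[H2 _] _; lia.
- by case/and3P=> /eqP -> _; rewrite eqxx.
Qed.

Lemma Eb_in b u v : ((u, v) \in Eb b) = erel b u v.
Proof. by rewrite inE. Qed.

Variable i : X.
Definition kk := (i.1.1 : nat).
Definition l1 := 2 * Q + i.1.2.
Definition l2 := Q + i.2.
Definition anc1 j := anc g.+1 l1 j.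
Definition anc2 j := anc g l2 (j - P).
Definition r1 := node kk 1.
Definition r2 := node kk R2.

Lemma kk_lt : kk < K. Proof. exact: ltn_ord. Qed.

Lemma l1_bounds : 2 ^ g.+1 <= l1 < 2 ^ g.+2.
Proof. have := ltn_ord i.1.2; rewrite /l1 !expnS; lia. Qed.
Lemma l2_bounds : 2 ^ g <= l2 < 2 ^ g.+1.
Proof. have := ltn_ord i.2; rewrite /l2 !expnS; lia. Qed.

Definition Cut1 := [set e : V * V | [&& valid e.1, valid e.2, cp e.1 == kk, cp e.2 == kk,
   T1node (loc e.1), T1node (loc e.2), loc e.2 %/ 2 == loc e.1, anc1 (loc e.1) & ~~ anc1 (loc e.2)]].
Definition Cut2 := [set e : V * V | [&& valid e.1, valid e.2, cp e.1 == kk, cp e.2 == kk,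
   T2node (loc e.1), T2node (loc e.2), (loc e.1 - P) %/ 2 == loc e.2 - P, ~~ anc2 (loc e.1) & anc2 (loc e.2)]].
Definition Fi := (hub, r2) |: (Cut1 :|: Cut2).

Lemma R2_lt : R2 < M. Proof. rewrite /R2; have := expn_gt0 2 g; lia. Qed.

Lemma Fi_sub b : Fi \subset Eb b.
Proof.
apply/subsetP => -[u v]; rewrite !inE /=.
case/orP; last case/orP.
- case/eqP=> -> ->; apply/or3P; apply: Or32.
  by rewrite hub_val eqxx node_val ?kk_lt ?R2_lt //= /hubtarget loc_node ?kk_lt ?R2_lt // eqxx !orbT.
- case/and5P=> vu vv /eqP cu /eqP cv /and5P[t1 t2 e _ _]; apply/or3P; apply: Or33.
  by rewrite vu vv cu cv eqxx /localedge t1 t2 e //=.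
- case/and5P=> vu vv /eqP cu /eqP cv /and5P[t1 t2 e _ _]; apply/or3P; apply: Or33.
  by rewrite vu vv cu cv eqxx /localedge t1 t2 e //= orbT.
Qed.

Lemma Cut1_card : #|Cut1| <= g.+1.
Proof.
rewrite -[g.+1]card_ord.
apply: leq_trans (leq_imset_card (fun j : 'I_g.+1 =>
   (node kk (l1 %/ 2 ^ j.+1), node kk (sib (l1 %/ 2 ^ j)))) _).
apply: subset_leq_card; apply/subsetP => -[u v]; rewrite inE /=.
case/and5P=> vu vv /eqP cu /eqP cv /and5P[t1 t2 /eqP e a1 a2].
have [j [Hp Hq]] : exists j : 'I_g.+1, loc u = l1 %/ 2 ^ j.+1 /\ loc v = sib (l1 %/ 2 ^ j).
  apply: cut_sib => //; first exact: l1_bounds.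
  move: t2; rewrite /T1node expnS; lia.
apply/imsetP; exists j => //.
by rewrite (node_eta vu) (node_eta vv) cu cv Hp Hq.
Qed.

Lemma Cut2_card : #|Cut2| <= g.
Proof.
rewrite -[g in _ <= g]card_ord.
apply: leq_trans (leq_imset_card (fun j : 'I_g =>
   (node kk (P + sib (l2 %/ 2 ^ j)), node kk (P + l2 %/ 2 ^ j.+1))) _).
apply: subset_leq_card; apply/subsetP => -[u v]; rewrite inE /=.
case/and5P=> vu vv /eqP cu /eqP cv /and5P[t1 t2 /eqP e a1 a2].
have [j [Hp Hq]] : exists j : 'I_g, loc v - P = l2 %/ 2 ^ j.+1 /\ loc u - P = sib (l2 %/ 2 ^ j).
  apply: cut_sib => //; first exact: l2_bounds.
  move: t1; rewrite /T2node; lia.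
apply/imsetP; exists j => //.
rewrite (node_eta vu) (node_eta vv) cu cv -Hp -Hq.
move: t1 t2; rewrite /T2node => /andP[h1 _] /andP[h2 _].
by rewrite !subnKC // ltnW.
Qed.

Lemma Fi_card : #|Fi| <= 2 * g.+1.
Proof.
rewrite cardsU1; apply: leq_trans (leq_add (leq_b1 _) (leq_trans (leq_card_setU _ _) (leq_add Cut1_card Cut2_card))) _.
lia.
Qed.

Definition inS (v : V) := ~~ [&& valid v, cp v == kk &
   (T1node (loc v) && ~~ anc1 (loc v)) || (T2node (loc v) && anc2 (loc v))].

Lemma anc1_root : anc1 1.
Proof. apply/ancP; exists g.+1 => //; apply: anc_top; exact: l1_bounds. Qed.

Lemma anc2_root : anc2 R2.
Proof.
apply/ancP; exists g => //; rewrite /R2 subSnn; apply: anc_top; exact: l2_bounds.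
Qed.

Lemma r2_notS : ~~ inS r2.
Proof.
rewrite /inS negbK /r2 valid_node ?kk_lt ?R2_lt // cp_node ?kk_lt ?R2_lt // loc_node ?kk_lt ?R2_lt //.
rewrite eqxx anc2_root /T2node /R2 !andbT /= orbC; apply/orP; left.
have := expn_gt0 2 g; lia.
Qed.

Lemma hub_S : inS hub.
Proof. by rewrite /inS (negbTE hub_invalid). Qed.


Lemma Q_gt0 : 0 < Q. Proof. exact: expn_gt0. Qed.
Lemma T1_T2 j : T1node j -> T2node j = false.
Proof. rewrite /T1node /T2node; have := Q_gt0; lia. Qed.
Lemma T2_T1 j : T2node j -> T1node j = false.
Proof. rewrite /T1node /T2node; have := Q_gt0; lia. Qed.
Lemma T1leaf_node j : T1leaf j -> T1node j.
Proof. rewrite /T1node /T1leaf; have := Q_gt0; lia. Qed.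
Lemma T2leaf_node j : T2leaf j -> T2node j.
Proof. rewrite /T2node /T2leaf; have := Q_gt0; lia. Qed.
Lemma T1node1 : T1node 1. Proof. rewrite /T1node; have := Q_gt0; lia. Qed.
Lemma T2nodeR2 : T2node R2. Proof. rewrite /T2node /R2; have := Q_gt0; lia. Qed.
Lemma T1leaf_ge j : T1leaf j -> 2 ^ g.+1 <= j.
Proof. rewrite /T1leaf expnS; lia. Qed.
Lemma T2leaf_ge j : T2leaf j -> 2 ^ g <= j - P.
Proof. rewrite /T2leaf; lia. Qed.

Lemma S_closed (b : {ffun X -> bool}) : b i = false -> forall u v, inS u -> adj (Eb b :\: Fi) u v -> inS v.
Proof.
move=> bf u v hu; rewrite /adj !inE => /andP[nF].
rewrite negb_or in nF; case/andP: nF => nF1; rewrite negb_or => /andP[nC1 nC2].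
rewrite /erel; case/or3P.
- case/andP=> _ /eqP v0; rewrite /inS /valid v0 //.
- case/and3P=> /eqP u0 v0 Hv; rewrite /inS; apply/negP => /and3P[vv /eqP cv HX].
  move: Hv; rewrite vv /= /hubtarget; case/or3P.
  + by rewrite negb_or => /andP[/negbTE h1 /negbTE h2]; rewrite h1 h2 in HX.
  + move/eqP=> l1v; move: HX; by rewrite l1v anc1_root T1_T2 // T1node1.
  + move/eqP=> lv; move/negP: nF1; apply.
    have -> : u = hub by apply: val_inj; rewrite /= hub_val u0.
    by rewrite (node_eta vv) cv lv.
case/and4P=> vu vv /eqP cuv HL; rewrite /inS; apply/negP => /and3P[_ /eqP cv HX].
have cu : cp u = kk by rewrite cuv.
move: hu; rewrite /inS vu cu eqxx /= => hu.
move: HL; rewrite /localedge; case/or4P.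
- case/and3P=> t1 t2 e.
  have a1 : anc1 (loc u) by move: hu; rewrite t1 /=; case: (anc1 _) => //.
  have na : ~~ anc1 (loc v) by move: HX; rewrite t2 T1_T2 //= orbF.
  by move/negP: nC1; apply; rewrite /= vu vv cu cv eqxx t1 t2 e a1 na.
- case/and3P=> t1 t2 e.
  have a1 : ~~ anc2 (loc u) by move: hu; rewrite t1 T2_T1 //=.
  have na : anc2 (loc v) by move: HX; rewrite t2 T2_T1 //=.
  by move/negP: nC2; apply; rewrite /= vu vv cu cv eqxx t1 t2 e a1 na.
- case/and3P=> t1 t2 e.
  have t1' := T1leaf_node t1.
  have a1 : anc1 (loc u) by move: hu; rewrite t1' /=; case: (anc1 _) => //.
  have e1 : loc u = l1.
    apply: (anc_leaf l1_bounds a1); exact: T1leaf_ge.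
  have t2' := T2leaf_node t2.
  have na : anc2 (loc v) by move: HX; rewrite t2' T2_T1 //=.
  have e2 : loc v - P = l2.
    apply: (anc_leaf l2_bounds na); exact: T2leaf_ge.
  case/existsP: e => i' /and4P[bi' /eqP h1 /eqP h2 /eqP h3].
  have ii : i' = i.
    move: h1 h2 h3 => /= h1 h2 h3; move: h1 h2 h3; rewrite cu e1 e2 /l1 /l2 /kk !addKn => h1 h2 h3.
    case: i' i {bf hu cu a1 e1 e2 na cv cuv nC1 nC2 nF1 HX} bi' h1 h2 h3 => [[a b'] c] [[a' b''] c'] /= _ h1 h2 h3.
    by congr (_, _, _); apply: val_inj.
  by move: bi'; rewrite ii bf.
- by case/and3P=> /eqP e _ _; move: hu; rewrite e anc2_root T2nodeR2 orbT.
Qed.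

Lemma not_diam (b : {ffun X -> bool}) : b i = false -> ~ diam_finite (Eb b :\: Fi).
Proof.
move=> bf /(diam_conn hub r2) C; have := closed_conn (S_closed bf) hub_S C.
by rewrite (negbTE r2_notS).
Qed.

Section Reach.
Variable b : {ffun X -> bool}.
Hypothesis bt : b i = true.
Local Notation G := (adj (Eb b :\: Fi)).

Lemma edgeG (u v : V) : erel b u v -> (u, v) \notin Fi -> G u v.
Proof. by move=> e nF; rewrite /adj in_setD nF Eb_in. Qed.

Lemma notFi (u v : V) : (u, v) != (hub, r2) ->
  [|| ~~ valid u, ~~ valid v, cp u != kk |
     (T1node (loc u) ==> (T1node (loc v) ==> anc1 (loc v))) && (T2node (loc u) ==> anc2 (loc u))] ->
  (u, v) \notin Fi.
Proof.
move=> ne H; rewrite !inE negb_or ne /= negb_or; apply/andP; split; apply/negP.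
- case/and5P=> vu vv /eqP cu _ /and5P[t1 t2 _ _ na]; move: H.
  by rewrite vu vv cu eqxx t1 t2 (negbTE na).
- case/and5P=> vu vv /eqP cu _ /and5P[t1 t2 _ na _]; move: H.
  by rewrite vu vv cu eqxx t1 (negbTE na) andbF.
Qed.

Lemma valid_r2 : valid r2. Proof. exact: valid_node kk_lt R2_lt. Qed.

Lemma ne_hub (v : V) : valid v -> v != hub.
Proof. by move=> vv; apply: contraTneq vv => ->; exact: hub_invalid. Qed.

Lemma to_hub (v : V) : connect G v hub.
Proof.
have [-> //|nv] := eqVneq v hub.
apply: connect1; apply: edgeG.
  rewrite /erel hub_val eqxx andbT; apply/orP; left.
  rewrite lt0n; apply: contra nv => /eqP h; apply/eqP; apply: val_inj; by rewrite /= hub_val h.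
apply: notFi; first by apply: contra nv => /eqP [] ->.
by rewrite hub_invalid orbT.
Qed.

Lemma hub_edge (v : V) : 0 < (v : nat) -> ~~ valid v || hubtarget (loc v) -> v != r2 -> G hub v.
Proof.
move=> v0 h nr; apply: edgeG.
  by rewrite /erel hub_val eqxx v0 h orbT.
apply: notFi; first by apply: contra nr => /eqP [] ->.
by rewrite hub_invalid.
Qed.

Lemma valid_gt0 (v : V) : valid v -> 0 < (v : nat).
Proof. by case/andP. Qed.

Lemma Mbound x : x < 2 * Q -> P + x < M.
Proof. lia. Qed.

Lemma node_ne_hub k j : k < K -> j < M -> node k j != hub.
Proof.
move=> Hk Hj; apply/negP => /eqP /(congr1 (fun x : V => x : nat)).
by rewrite node_val // hub_val -addnA add1n.
Qed.

Lemma reach_r1 : connect G hub r1.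
Proof.
have R1M : 1 < M by have := Q_gt0; lia.
apply: connect1; apply: hub_edge.
- exact/valid_gt0/valid_node/R1M/kk_lt.
- by rewrite /r1 /hubtarget loc_node ?kk_lt // eqxx /= !orbT.
- apply/negP => /eqP /(congr1 loc); rewrite /r2 /r1 !loc_node ?kk_lt ?R2_lt //.
  by rewrite /R2; have := Q_gt0; lia.
Qed.

Lemma T1P x : 0 < x < 2 ^ g.+2 -> T1node x.
Proof. by rewrite /T1node !expnS mulnA. Qed.

Lemma reach_T1 m a : a + m = g.+1 -> connect G hub (node kk (l1 %/ 2 ^ a)).
Proof.
elim: m a => [|m IH] a.
  by rewrite addn0 => ->; rewrite anc_top; [exact: reach_r1 | exact: l1_bounds].
move=> Ha; have H1 : a.+1 + m = g.+1 by rewrite addSnnS.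
have := IH _ H1.
move/connect_trans; apply; apply: connect1.
have [b1 b2] : 0 < l1 %/ 2 ^ a.+1 < 2 ^ g.+2 /\ 0 < l1 %/ 2 ^ a < 2 ^ g.+2.
  split; apply/andP; apply: anc_bounds; try exact: l1_bounds; lia.
have M1 : 2 ^ g.+2 < M by rewrite !expnS mulnA; have := Q_gt0; lia.
have L1 : l1 %/ 2 ^ a.+1 < M by case/andP: b1 => _ h; exact: ltn_trans h M1.
have L2 : l1 %/ 2 ^ a < M by case/andP: b2 => _ h; exact: ltn_trans h M1.
apply: edgeG.
  rewrite /erel !valid_node ?kk_lt // !cp_node ?kk_lt // !loc_node ?kk_lt // eqxx /=.
  by rewrite /localedge !T1P // div2S eqxx /= !orbT.
apply: notFi.
  by apply/negP => /eqP [] /eqP; rewrite (negbTE (node_ne_hub kk_lt L1)).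
rewrite !loc_node ?kk_lt // T1_T2 ?T1P //= andbT; do 3 (apply/orP; right).
by apply/ancP; exists a => //; lia.
Qed.

Lemma reach_l1 : connect G hub (node kk l1).
Proof. by have := reach_T1 (m := g.+1) (a := 0) erefl; rewrite expn0 divn1. Qed.

Lemma T2P x : 0 < x < 2 ^ g.+1 -> T2node (P + x).
Proof. rewrite /T2node expnS; lia. Qed.

Lemma l1M : l1 < M.
Proof. have := l1_bounds; rewrite !expnS => /andP[_]; lia. Qed.

Lemma xM x : 0 < x < 2 ^ g.+1 -> P + x < M.
Proof. rewrite expnS => /andP[_]; exact: Mbound. Qed.

Lemma reach_l2 : connect G hub (node kk (P + l2)).
Proof.
apply: connect_trans reach_l1 _; apply: connect1.
have l2b : 0 < l2 < 2 ^ g.+1.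
  by have := l2_bounds => /andP[h1 ->]; rewrite andbT; apply: leq_trans h1; rewrite expn_gt0.
have L2 := xM l2b.
have T2l : T2leaf (P + l2) by move: l2b; rewrite /T2leaf /l2 expnS; have := ltn_ord i.2; lia.
have T1l : T1leaf l1 by rewrite /T1leaf /l1; have := ltn_ord i.1.2; lia.
apply: edgeG.
  rewrite /erel !valid_node ?kk_lt ?l1M // !cp_node ?kk_lt ?l1M // !loc_node ?kk_lt ?l1M // eqxx /=.
  have Hb : bitnat b kk (l1 - 2 * Q) (P + l2 - P - Q).
    apply/existsP; exists i; rewrite bt /= /kk eqxx /l1 addKn eqxx /= addKn /l2 addKn.
    by rewrite eqxx.
  by rewrite /localedge T1l T2l Hb /= !orbT.
apply: notFi.
  by apply/negP => /eqP [] /eqP; rewrite (negbTE (node_ne_hub kk_lt l1M)).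
rewrite !loc_node ?kk_lt ?l1M // (T2_T1 (T2leaf_node T2l)) (T1_T2 (T1leaf_node T1l)) /=.
by rewrite implybT !orbT.
Qed.

Lemma reach_T2 a : a <= g -> connect G hub (node kk (P + l2 %/ 2 ^ a)).
Proof.
elim: a => [_|a IH Ha]; first by rewrite expn0 divn1; exact: reach_l2.
apply: connect_trans (IH (ltnW Ha)) _; apply: connect1.
have [b1 b2] : 0 < l2 %/ 2 ^ a.+1 < 2 ^ g.+1 /\ 0 < l2 %/ 2 ^ a < 2 ^ g.+1.
  split; apply/andP; apply: anc_bounds; try exact: l2_bounds; lia.
have L1 := xM b1; have L2 := xM b2.
apply: edgeG.
  rewrite /erel !valid_node ?kk_lt // !cp_node ?kk_lt // !loc_node ?kk_lt // eqxx /=.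
  rewrite /localedge !T2P // !addKn div2S eqxx /=.
  by rewrite !orbT.
apply: notFi.
  by apply/negP => /eqP [] /eqP; rewrite (negbTE (node_ne_hub kk_lt L2)).
rewrite (loc_node kk_lt L1) (loc_node kk_lt L2) (T2_T1 (T2P b1)) (T2_T1 (T2P b2)) (T2P b2) /=; do 3 (apply/orP; right).
rewrite /anc2; apply/ancP; exists a; [exact: ltnW | by rewrite addKn].
Qed.

Lemma reach_r2 : connect G hub r2.
Proof.
by have := reach_T2 (leqnn g); rewrite (anc_top l2_bounds) addn1.
Qed.

Lemma reach_r2' k : k < K -> connect G hub (node k R2).
Proof.
move=> Hk; have [->|nk] := eqVneq k kk; first exact: reach_r2.
apply: connect1; apply: hub_edge.
- exact/valid_gt0/valid_node/R2_lt.
- by rewrite /hubtarget loc_node ?R2_lt // eqxx /= !orbT.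
- apply/negP => /eqP /(congr1 cp); rewrite /r2 !cp_node ?kk_lt ?R2_lt //.
  by move/eqP; rewrite (negbTE nk).
Qed.

Lemma reach_valid v : valid v -> connect G hub v.
Proof.
move=> vv; have ck : cp v < K by case/andP: vv.
rewrite (node_eta vv).
have [lr|nlr] := eqVneq (loc v) R2; first by rewrite lr; exact: reach_r2'.
have [Tn|nT] := boolP (T1node (loc v) || T2node (loc v)).
  apply: connect_trans (reach_r2' ck) _; apply: connect1; apply: edgeG.
    rewrite /erel !valid_node ?loc_lt ?R2_lt // !cp_node ?loc_lt ?R2_lt // !loc_node ?loc_lt ?R2_lt //.
    by rewrite eqxx /localedge eqxx Tn nlr /= !orbT.
  apply: notFi.
    by apply/negP => /eqP [] /eqP; rewrite (negbTE (node_ne_hub ck R2_lt)).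
  rewrite !loc_node ?loc_lt ?R2_lt // T2nodeR2 anc2_root /=.
  rewrite (T2_T1 T2nodeR2) /=.
  by do 3 (apply/orP; right).
apply: connect1; apply: hub_edge.
- exact/valid_gt0/valid_node/loc_lt.
- by rewrite /hubtarget loc_node ?loc_lt // nT orbT.
- apply/negP => /eqP /(congr1 loc); rewrite /r2 !loc_node ?kk_lt ?loc_lt ?R2_lt //.
  by move/eqP; rewrite (negbTE nlr).
Qed.

Lemma reach_all v : connect G hub v.
Proof.
have [->//|nh] := eqVneq v hub.
have [vv|nv] := boolP (valid v); first exact: reach_valid.
apply: connect1; apply: hub_edge.
- rewrite lt0n; apply: contra nh => /eqP h; apply/eqP; apply: val_inj; by rewrite /= hub_val h.
- by rewrite nv.
- by apply: contra nv => /eqP ->; exact: valid_r2.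
Qed.

Lemma yes_diam : diam_finite (Eb b :\: Fi).
Proof.
apply: conn_diam => s t; apply: connect_trans (to_hub s) (reach_all t).
Qed.

End Reach.

End Constr.

Theorem lemma10 :
  exists c d : nat, 0 < c /\ 0 < d /\
  forall n f : nat, 1 <= f -> d * (2 * f) <= trunc_log 2 n ->
  forall (s : nat)
         (enc : {set 'I_n * 'I_n} -> s.-tuple bool)
         (query : s.-tuple bool -> {set 'I_n * 'I_n} -> bool),
    (forall E F : {set 'I_n * 'I_n}, loopless E -> F \subset E -> #|F| <= 2 * f ->
        query (enc E) F <-> diam_finite (remove_edges E F)) ->
    2 ^ f * n <= c * s.
Proof.
exists 16, 2; split => //; split => //.
move=> n f f1 Hlog s enc query H.
case: n enc query H Hlog => [|n'] enc query H Hlog; first by move: Hlog; rewrite trunc_log0; lia.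
case: f f1 H Hlog => [//|g] _ H Hlog.
pose K := n' %/ (8 * 2 ^ g).
have HKM : K * (8 * 2 ^ g) <= n' := leq_trunc_div n' _.
have key : forall (i : X K g) (b b' : {ffun X K g -> bool}),
    b i = true -> b' i = false -> enc (Eb n' b) <> enc (Eb n' b').
  move=> i b b' bt bf he.
  have h1 := H (Eb n' b) (Fi n' i) (loopless_Eb HKM b) (Fi_sub HKM i b) (Fi_card HKM i).
  have h2 := H (Eb n' b') (Fi n' i) (loopless_Eb HKM b') (Fi_sub HKM i b') (Fi_card HKM i).
  apply: (not_diam HKM bf); apply/h2; rewrite -he; apply/h1; exact: yes_diam HKM _ _ bt.
have inj : injective (fun b : {ffun X K g -> bool} => enc (Eb n' b)).
  move=> b b' /= he; apply/ffunP => i.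
  case bi: (b i); case bi': (b' i) => //.
  - by case: (key i b b' bi bi').
  - by case: (key i b' b bi' bi (esym he)).
have := leq_card _ inj; rewrite card_ffun card_tuple !card_bool leq_exp2l //.
rewrite /X !card_prod !card_ord => hs.
have hq : 16 * 2 ^ g <= n'.+1.
  apply: leq_trans (trunc_logP (isT : 1 < 2) (ltn0Sn n')).
  rewrite -(expnD 2 4) leq_exp2l //; lia.
have hc : n' < K.+1 * (8 * 2 ^ g) by apply: ltn_ceil; rewrite muln_gt0 expn_gt0.
rewrite expnS.
clearbody K; clear -hs hq hc; move: hs hq hc; move: (2 ^ g) => q; nia.
Qed.
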